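(* Let $k \geq 2$ be an integer and let $G_1, \dots, G_k$ be finite simple Class 1 graphs with maximum degrees $\Delta(G_1), \dots, \Delta(G_k)$. Let $G = G_1 \square G_2 \square \cdots \square G_k$ and $D = \sum_{i=1}^k \Delta(G_i)$. Suppose $D$ is even and $2\Delta(G_i) < D$ for every $i \in \{1,\dots,k\}$. Suppose that some set $E_0 \subseteq E(G)$ of edges is precolored with colors from a set of at most $D$ colors, such that the distance between any two edges of $E_0$ is at least three. Then this precoloring is extendable, i.e. there is a proper edge coloring of $G$ with $\chi'(G)$ colors in which every edge of $E_0$ receives its prescribed color.
   Context: A graph $G$ is Class 1 if its chromatic index $\chi'(G)$ equals its maximum degree $\Delta(G)$. The Cartesian product $G_1 \square G_2$ has vertex set $V(G_1)\times V(G_2)$, with $(u_1,u_2)$ adjacent to $(v_1,v_2)$ iff either $u_1=v_1$ and $u_2v_2 \in E(G_2)$, or $u_2=v_2$ and $u_1v_1\in E(G_1)$; iterated products are defined accordingly. The distance $d(x,y)$ between vertices is the length of a shortest $x$–$y$ path, and the distance between edges $e=xy$ and $f=zw$ is $\min\{d(x,z),d(x,w),d(y,z),d(y,w)\}$. A precoloring of $E_0$ is extendable if there is a proper edge coloring of the whole graph with $\chi'$ of the graph colors whose restriction to $E_0$ is the prescribed coloring. *)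

(* Defs.v *)
(* Finite simple graphs as symmetric irreflexive relations. *)
From mathcomp Require Import all_boot.
Set Implicit Arguments. Unset Strict Implicit. Unset Printing Implicit Defensive.

Section Graphs.
Variables (V : finType) (adj : rel V).

Definition edges : {set {set V}} :=
  [set e : {set V} | [exists x, exists y, adj x y && (e == [set x; y])]].

Definition Delta : nat := \max_(v : V) #|[set u | adj v u]|.

Definition proper_coloring (n : nat) (c : {set V} -> nat) : bool :=
  [forall e in edges, c e < n] &&
  [forall e in edges, forall f in edges,
      ((e != f) && (e :&: f != set0)) ==> (c e != c f)].

Definition colorable (n : nat) : bool :=
  [exists c : {ffun {set V} -> 'I_n.+1}, proper_coloring n (fun e => c e)].

Lemma colorable_exists : exists n, colorable n.
Proof.
exists #|{set V}|; apply/existsP.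
exists [ffun e => inord (enum_rank e)].
apply/andP; split.
  apply/forallP=> e; apply/implyP=> _; rewrite ffunE inordK //.
  by apply: (leq_trans (ltn_ord (enum_rank e))); rewrite cardE.
apply/forallP=> e; apply/implyP=> _; apply/forallP=> f; apply/implyP=> _.
apply/implyP=> /andP [nef _]; rewrite !ffunE.
have lt (x : {set V}) : (enum_rank x : nat) < #|{set V}|.+1.
  by apply: (leq_trans (ltn_ord (enum_rank x))); rewrite cardE.
rewrite inordK // inordK //.
apply: contra nef => /eqP H; apply/eqP.
by apply: enum_rank_inj; apply: val_inj.
Qed.

Definition chromatic_index : nat := ex_minn colorable_exists.

Definition class1 : Prop := chromatic_index = Delta.

(* d(x,y) >= m, where d is shortest-path distance (infinite if disconnected) *)
Definition dist_ge (x y : V) (m : nat) : Prop :=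
  forall p : seq V, path adj x p -> last x p = y -> m <= size p.

Definition edge_dist_ge (e f : {set V}) (m : nat) : Prop :=
  forall x y, x \in e -> y \in f -> dist_ge x y m.

End Graphs.

Definition prod_vertex (k : nat) (V : 'I_k -> finType) : finType :=
  {dffun forall i : 'I_k, V i}.

Definition prod_adj (k : nat) (V : 'I_k -> finType) (adj : forall i, rel (V i))
  : rel (prod_vertex V) :=
  fun x y => [exists i, adj i (x i) (y i) && [forall j, (j != i) ==> (x j == y j)]].

(* Main.v *)
Require Import Defs.
From mathcomp Require Import all_boot zify.
Unset Printing Implicit Defensive.

Section Prod.
Variables (k : nat) (V : 'I_k -> finType) (adj : forall i, rel (V i)).
Hypothesis Hsym : forall i : 'I_k, symmetric (adj i).
Hypothesis Hirr : forall i : 'I_k, irreflexive (adj i).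
Local Notation vert := (prod_vertex V).
Local Notation pa := (prod_adj adj).
Set Implicit Arguments. Unset Strict Implicit.

Definition upd (x : vert) (i : 'I_k) (a : V i) : vert :=
  [ffun j => match i =P j with ReflectT e => ecast j (V j) e a | ReflectF _ => x j end].
Arguments upd x i a : clear implicits.

Lemma upd_same (x : vert) i a : upd x i a i = a.
Proof. rewrite /upd ffunE; case: eqP => // e. by rewrite (eq_irrelevance e erefl). Qed.
Lemma upd_other (x : vert) i a j : i != j -> upd x i a j = x j.
Proof. by rewrite /upd ffunE; case: eqP. Qed.

Lemma paP (x y : vert) : reflect (exists i, adj i (x i) (y i) /\ forall j, j != i -> x j = y j) (pa x y).
Proof.
apply: (iffP existsP) => [[i /andP[a /forallP f]]|[i [a f]]]; exists i.
  by split=> // j ji; move/(_ j): f; rewrite ji => /eqP.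
by rewrite a /=; apply/forallP => j; apply/implyP => /f ->.
Qed.

Lemma pa_sym : symmetric pa.
Proof.
move=> x y; apply/paP/paP => [][i [a f]]; exists i; rewrite Hsym; split=> // j /f //.
Qed.

Lemma pa_irr : irreflexive pa.
Proof. by move=> x; apply/paP => [][i [a _]]; rewrite Hirr in a. Qed.

Lemma pa_upd (x y : vert) i : (forall j, j != i -> x j = y j) -> y = upd x i (y i).
Proof.
move=> f; apply/ffunP => j; case: (eqVneq i j) => [<-|ij]; first by rewrite upd_same.
by rewrite upd_other // f // eq_sym.
Qed.

Lemma upd_pa (x : vert) i a : adj i (x i) a -> pa x (upd x i a).
Proof.
move=> h; apply/paP; exists i; rewrite upd_same; split=> // j ji.
by rewrite upd_other // eq_sym.
Qed.

Definition gedge (h : {set vert}) (i : 'I_k) : {set V i} := [set (x : vert) i | x in h].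

Lemma gedge_pair (x y : vert) i : gedge [set x; y] i = [set x i; y i].
Proof. by rewrite /gedge imsetU1 imset_set1. Qed.

Variable i0 : 'I_k.
Definition edir (h : {set vert}) : 'I_k := odflt i0 [pick i | 1 < #|gedge h i|].

Lemma edir_pair (x y : vert) i : adj i (x i) (y i) -> (forall j, j != i -> x j = y j) ->
  edir [set x; y] = i.
Proof.
move=> a f; rewrite /edir; case: pickP => [j|] /=; rewrite ?gedge_pair ?cards2.
  by case: (eqVneq j i) => [//|/f ->]; rewrite eqxx.
move/(_ i); rewrite gedge_pair cards2; case: eqP => // e; by rewrite e Hirr in a.
Qed.

Unset Implicit Arguments.
Variable cc : forall i : 'I_k, {set V i} -> nat.
Hypothesis Hcc : forall i : 'I_k, proper_coloring (adj i) (Delta (adj i)) (cc i).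
Set Implicit Arguments.
Local Notation Dl i := (Delta (adj i)).

Definition dd (j : nat) : nat := oapp (fun o : 'I_k => Dl o) 0 (insub j).
Definition offs (n : nat) : nat := \sum_(j < n) dd j.
Definition DD := offs k.

Lemma ddE (i : 'I_k) : dd i = Dl i.
Proof. by rewrite /dd valK. Qed.

Lemma DDE : DD = \sum_(i < k) Dl i.
Proof. by rewrite /DD /offs; apply: eq_bigr => i _; rewrite ddE. Qed.

Lemma offsS n : offs n.+1 = offs n + dd n.
Proof. by rewrite /offs big_ord_recr. Qed.

Lemma offs_mono m n : m <= n -> offs m <= offs n.
Proof.
move=> /subnKC <-; elim: (n - m) => [|t IH]; first by rewrite addn0.
by rewrite addnS offsS; apply: leq_trans IH (leq_addr _ _).
Qed.

Lemma offs_blk i j : i < j -> offs i + dd i <= offs j.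
Proof. by move=> ij; rewrite -offsS; apply: offs_mono. Qed.

Definition dcol (q : nat) : 'I_k := odflt i0 [pick i : 'I_k | offs i <= q < offs i + Dl i].

Lemma blk_uniq (i j : 'I_k) q : offs i <= q < offs i + Dl i ->
  offs j <= q < offs j + Dl j -> i = j.
Proof.
rewrite -!ddE => /andP[a b] /andP[c d]; apply/val_inj/eqP; rewrite eqn_leq.
case: (ltngtP i j) => // [ij|ji].
  by have := offs_blk ij; lia.
by have := offs_blk ji; lia.
Qed.

Lemma dcolE (i : 'I_k) c : c < Dl i -> dcol (offs i + c) = i.
Proof.
move=> ci; rewrite /dcol; case: pickP => [j /= hj|/(_ i)].
  by apply: (blk_uniq hj); rewrite leq_addr ltn_add2l.
by rewrite leq_addr ltn_add2l ci.
Qed.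

Lemma cover n q : n <= k -> q < offs n -> exists i : 'I_k, offs i <= q < offs i + Dl i.
Proof.
elim: n => [|n IH] nk qlt; first by move: qlt; rewrite /offs big_ord0.
move: qlt; rewrite offsS; case: (ltnP q (offs n)) => [h _|h1 h2]; first exact: IH (ltnW nk) h.
exists (Ordinal nk); by rewrite -ddE /= h1 h2.
Qed.

Lemma dcol_spec q : q < DD -> offs (dcol q) <= q < offs (dcol q) + Dl (dcol q).
Proof.
move=> qD; rewrite /dcol; case: pickP => [j //|no].
by have [i hi] := cover (leqnn k) qD; rewrite no in hi.
Qed.

Lemma blk_lt (i : 'I_k) : offs i + Dl i <= DD.
Proof. by rewrite -ddE -offsS; apply: offs_mono. Qed.


Lemma edges_pair (T : finType) (r : rel T) a b : r a b -> [set a; b] \in edges r.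
Proof. by move=> h; rewrite inE; apply/existsP; exists a; apply/existsP; exists b; rewrite h eqxx. Qed.

Lemma cc_lt i a b : adj i a b -> cc i [set a; b] < Dl i.
Proof.
move=> h; case/andP: (Hcc i) => /forallP /(_ [set a; b]) /implyP H _.
exact: H (edges_pair h).
Qed.

Lemma cc_inj i a b b' : adj i a b -> adj i a b' -> cc i [set a; b] = cc i [set a; b'] -> b = b'.
Proof.
move=> h h' e; apply/eqP/negPn/negP => bb.
case/andP: (Hcc i) => _ /forallP /(_ [set a; b]) /implyP /(_ (edges_pair h)).
move=> /forallP /(_ [set a; b']) /implyP /(_ (edges_pair h')) /implyP H.
have : cc i [set a; b] != cc i [set a; b'].
  apply: H; apply/andP; split.
    apply/negP => /eqP E; have : b \in [set a; b'] by rewrite -E !inE eqxx orbT.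
    rewrite !inE (negbTE bb) orbF => /eqP ba; by rewrite ba Hirr in h.
  by apply/set0Pn; exists a; rewrite !inE eqxx.
by rewrite e eqxx.
Qed.

Definition sg (h : {set vert}) : nat := offs (edir h) + cc (edir h) (gedge h (edir h)).

Lemma sg_pair (x y : vert) i : adj i (x i) (y i) -> (forall j, j != i -> x j = y j) ->
  sg [set x; y] = offs i + cc i [set x i; y i].
Proof. by move=> a f; rewrite /sg (edir_pair a f) gedge_pair. Qed.

Definition nbr q (x y : vert) := pa x y && (sg [set x; y] == q).

Lemma nbrP q (x y : vert) : nbr q x y -> [/\ q < DD, adj (dcol q) (x (dcol q)) (y (dcol q)),
  (forall j, j != dcol q -> x j = y j) &
  q = offs (dcol q) + cc (dcol q) [set x (dcol q); y (dcol q)]].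
Proof.
case/andP => /paP[i [a f]] /eqP; rewrite (sg_pair a f) => <-.
rewrite dcolE ?cc_lt //; split => //.
by apply: leq_trans (blk_lt i); rewrite ltn_add2l cc_lt.
Qed.

Lemma nbr_sym q (x y : vert) : nbr q x y = nbr q y x.
Proof. by rewrite /nbr pa_sym setUC. Qed.

Lemma nbr_uniq q (x y y' : vert) : nbr q x y -> nbr q x y' -> y = y'.
Proof.
move=> /nbrP[_ a f e] /nbrP[_ a' f' e'].
have yi : y (dcol q) = y' (dcol q).
  by apply: (cc_inj a a'); move: e e'; set c1 := cc _ _; set c2 := cc _ _; lia.
apply/ffunP => j; case: (eqVneq j (dcol q)) => [->//|ji]; by rewrite -f // -f'.
Qed.

Lemma nbr_move q (x y x' : vert) : nbr q x y -> x' (dcol q) = x (dcol q) ->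
  nbr q x' (upd x' (dcol q) (y (dcol q))).
Proof.
move=> /nbrP[_ a f e] ex.
have a' : adj (dcol q) (x' (dcol q)) (y (dcol q)) by rewrite ex.
apply/andP; split; first exact: upd_pa.
rewrite (@sg_pair x' (upd x' (dcol q) (y (dcol q))) (dcol q)) ?upd_same ?ex -?e //.
by move=> j ji; rewrite upd_other // eq_sym.
Qed.

Lemma nbr_sq q r (x u z : vert) : nbr q x u -> nbr r x z -> dcol q != dcol r ->
  exists w, nbr r u w /\ nbr q z w.
Proof.
move=> hu hz dqr; exists (upd u (dcol r) (z (dcol r))); split.
  apply: nbr_move hz _; case/nbrP: hu => _ _ f _; by rewrite f // eq_sym.
have -> : upd u (dcol r) (z (dcol r)) = upd z (dcol q) (u (dcol q)).
  apply/ffunP => j; case: (eqVneq (dcol r) j) => [<-|rj].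
    by rewrite upd_same upd_other // eq_sym.
  rewrite upd_other //; case: (eqVneq (dcol q) j) => [<-|qj]; first by rewrite upd_same.
  rewrite upd_other //; case/nbrP: hu => _ _ f _; case/nbrP: hz => _ _ f' _.
  by rewrite -f ?f' // eq_sym.
apply: nbr_move hu _; case/nbrP: hz => _ _ f _; by rewrite f.
Qed.

Lemma edge_nbr h (x : vert) : h \in edges pa -> x \in h -> exists y, h = [set x; y] /\ nbr (sg h) x y.
Proof.
rewrite inE => /existsP[a /existsP[b /andP[ab /eqP ->]]].
rewrite !inE => /orP[/eqP->|/eqP->]; first by exists b; rewrite /nbr ab eqxx.
by exists a; rewrite setUC /nbr pa_sym ab eqxx.
Qed.

Lemma nbr_edge q (x y : vert) : nbr q x y -> [set x; y] \in edges pa /\ sg [set x; y] = q.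
Proof. by case/andP => a /eqP e; split => //; apply: edges_pair. Qed.

Hypothesis Heven : ~~ odd DD.
Hypothesis Hlt : forall i : 'I_k, 2 * Dl i < DD.

Definition hh := DD./2.
Definition pr q := (q + hh) %% DD.
Definition fac q := q %% hh.

Lemma DDh : DD = hh + hh.
Proof. by rewrite /hh addnn -{1}(odd_double_half DD) (negbTE Heven) add0n. Qed.

Lemma hh_gt0 : 0 < hh.
Proof. have := Hlt i0; have := DDh; lia. Qed.

Lemma prE q : q < DD -> pr q = if q < hh then q + hh else q - hh.
Proof.
move=> qD; rewrite /pr; case: ifP => qh.
  by rewrite modn_small //; have := DDh; lia.
have -> : q + hh = (q - hh) + DD by have := DDh; lia.
by rewrite modnDr modn_small //; have := DDh; lia.
Qed.

Lemma facE q : q < DD -> fac q = if q < hh then q else q - hh.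
Proof.
move=> qD; rewrite /fac; case: ifP => qh; first by rewrite modn_small.
have -> : q = (q - hh) + hh by lia.
by rewrite modnDr modn_small; have := DDh; lia.
Qed.

Lemma prL q : q < hh -> pr q = q + hh.
Proof. by move=> qh; rewrite prE ?qh //; have := DDh; lia. Qed.
Lemma prR q : hh <= q -> q < DD -> pr q = q - hh.
Proof. by move=> qh qD; rewrite prE // ltnNge qh. Qed.
Lemma facL q : q < hh -> fac q = q.
Proof. by move=> qh; rewrite facE ?qh //; have := DDh; lia. Qed.
Lemma facR q : hh <= q -> q < DD -> fac q = q - hh.
Proof. by move=> qh qD; rewrite facE // ltnNge qh. Qed.

Lemma pr_lt q : q < DD -> pr q < DD.
Proof.
move=> qD; have := DDh; case: (ltnP q hh) => qh; first by rewrite (prL qh); lia.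
by rewrite (prR qh qD); lia.
Qed.

Lemma prK q : q < DD -> pr (pr q) = q.
Proof.
move=> qD; have := DDh; case: (ltnP q hh) => qh E.
  by rewrite (prL qh) (@prR (q + hh)); lia.
by rewrite (prR qh qD) (@prL (q - hh)); lia.
Qed.

Lemma fac_pr q : q < DD -> fac (pr q) = fac q.
Proof.
move=> qD; have := DDh; case: (ltnP q hh) => qh E.
  by rewrite (prL qh) (@facR (q + hh)) ?(facL qh); lia.
by rewrite (prR qh qD) (@facL (q - hh)) ?(facR qh qD); lia.
Qed.

Lemma pr_neq q : q < DD -> pr q != q.
Proof.
move=> qD; have := hh_gt0; case: (ltnP q hh) => qh E.
  by rewrite (prL qh); apply/eqP; lia.
by rewrite (prR qh qD); apply/eqP; lia.
Qed.

Lemma fac_same q r : q < DD -> r < DD -> fac q = fac r -> r = q \/ r = pr q.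
Proof.
move=> qD rD; have := DDh.
case: (ltnP q hh) => qh; case: (ltnP r hh) => rh E.
- by rewrite (facL qh) (facL rh); lia.
- by rewrite (prL qh) (facL qh) (facR rh rD); lia.
- by rewrite (prR qh qD) (facR qh qD) (facL rh); lia.
- by rewrite (facR qh qD) (facR rh rD); lia.
Qed.

Lemma dcol_pr q : q < DD -> dcol (pr q) != dcol q.
Proof.
move=> qD; apply/eqP => E; have := dcol_spec qD; have := dcol_spec (pr_lt qD).
rewrite E; have := Hlt (dcol q); have := DDh.
by case: (ltnP q hh) => qh; [rewrite (prL qh)|rewrite (prR qh qD)]; lia.
Qed.

Lemma fac_lt q : q < DD -> fac q < hh.
Proof. by move=> _; rewrite /fac ltn_mod hh_gt0. Qed.

Definition step1 F (v w : vert) := [exists q : 'I_DD, (fac q == F) && nbr q v w].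
Definition reachb F (v w : vert) :=
  (w == v) || step1 F v w || [exists u, step1 F v u && step1 F u w].

Lemma nbr_lt q (v w : vert) : nbr q v w -> q < DD.
Proof. by case/nbrP. Qed.

Lemma nbr_pa q (v w : vert) : nbr q v w -> pa v w.
Proof. by case/andP. Qed.

Lemma step1P F (v w : vert) :
  reflect (exists q, fac q = F /\ nbr q v w) (step1 F v w).
Proof.
apply: (iffP existsP) => [[q /andP[/eqP f n]]|[q [f n]]]; first by exists q.
by exists (Ordinal (nbr_lt n)); rewrite /= f eqxx n.
Qed.

Lemma nbr_back q (v w w' : vert) : nbr q v w -> nbr q w w' -> w' = v.
Proof. by rewrite nbr_sym => h h'; apply: nbr_uniq h' h. Qed.

Lemma two_colors q r : q < DD -> r < DD -> fac q = fac r -> q != r ->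
  r = pr q /\ dcol r != dcol q.
Proof.
move=> qD rD f qr; case: (fac_same qD rD f) => E; first by rewrite E eqxx in qr.
by split=> //; rewrite E dcol_pr.
Qed.

Lemma step1_sym F (v w : vert) : step1 F v w -> step1 F w v.
Proof. by case/step1P => q [f n]; apply/step1P; exists q; rewrite nbr_sym. Qed.

Lemma reach_step F (v w w' : vert) : reachb F v w -> step1 F w w' -> reachb F v w'.
Proof.
move=> /orP[/orP[/eqP->|s1]|/existsP[u /andP[s1 s2]]] s3; rewrite /reachb.
- by rewrite s3 orbT.
- case/step1P: s1 => q1 [f1 n1]; case/step1P: s3 => q [f n].
  case: (eqVneq q1 q) => [E|ne].
    by rewrite E in n1; rewrite (nbr_back n1 n) eqxx.
  apply/orP; right; apply/existsP; exists w; apply/andP; split; apply/step1P.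
    by exists q1. by exists q.
- case/step1P: s1 => q1 [f1 n1]; case/step1P: s2 => q2 [f2 n2].
  case/step1P: s3 => q [f n].
  case: (eqVneq q q2) => [E|ne2].
    by rewrite E in n; rewrite (nbr_back n2 n); apply/orP; left; apply/orP; right; apply/step1P; exists q1.
  case: (eqVneq q1 q2) => [E|ne12].
    rewrite E in n1; rewrite (nbr_back n1 n2) in n.
    by apply/orP; left; apply/orP; right; apply/step1P; exists q.
  have [E2 d2] := two_colors (nbr_lt n1) (nbr_lt n2) (etrans f1 (esym f2)) ne12.
  have q1q : q = q1.
    case: (eqVneq q q1) => // ne1.
    have ne1' : q1 != q by rewrite eq_sym.
    have [E3 _] := two_colors (nbr_lt n1) (nbr_lt n) (etrans f1 (esym f)) ne1'.
    by rewrite -E3 in E2; rewrite E2 eqxx in ne2.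
  rewrite q1q in n; rewrite nbr_sym in n1.
  have d2' : dcol q1 != dcol q2 by rewrite eq_sym.
  have [z [nz1 nz2]] := nbr_sq n1 n2 d2'.
  have zw := nbr_uniq nz2 n; rewrite zw in nz1.
  by apply/orP; left; apply/orP; right; apply/step1P; exists q2.
Qed.

Lemma reach_sym F (v w : vert) : reachb F v w -> reachb F w v.
Proof.
rewrite /reachb => /orP[/orP[/eqP->|s1]|/existsP[u /andP[s1 s2]]]; first by rewrite eqxx.
  by rewrite step1_sym // orbT.
apply/orP; right; apply/existsP; exists u; apply/andP; split; exact: step1_sym.
Qed.

Lemma reach_refl F (v : vert) : reachb F v v.
Proof. by rewrite /reachb eqxx. Qed.

Definition near2 (u v : vert) := exists s, [/\ path pa u s, last u s = v & size s <= 2].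

Lemma near2_0 (u : vert) : near2 u u.
Proof. by exists [::]. Qed.
Lemma near2_1 (u v : vert) : pa u v -> near2 u v.
Proof. by move=> h; exists [:: v]; rewrite /= h. Qed.
Lemma near2_2 (u w v : vert) : pa u w -> pa w v -> near2 u v.
Proof. by move=> h h'; exists [:: w; v]; rewrite /= h h'. Qed.

Lemma step1_pa F (v w : vert) : step1 F v w -> pa v w.
Proof. by case/step1P => q [_ /nbr_pa]. Qed.

Lemma reach_near F (v w : vert) : reachb F v w -> near2 v w.
Proof.
rewrite /reachb => /orP[/orP[/eqP->|s1]|/existsP[u /andP[s1 s2]]]; first exact: near2_0.
  exact/near2_1/(step1_pa s1).
exact: near2_2 (step1_pa s1) (step1_pa s2).
Qed.

Lemma comp_vertex F (v w y : vert) : step1 F y w ->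
  [exists z in [set w; y], reachb F v z] = reachb F v w.
Proof.
move=> s; apply/idP/idP => [/existsP[z /andP[]]|r].
  by rewrite !inE => /orP[/eqP->//|/eqP->] r; apply: reach_step r s.
by apply/existsP; exists w; rewrite !inE eqxx.
Qed.

Lemma edgeP h : h \in edges pa -> exists x y, h = [set x; y] /\ nbr (sg h) x y.
Proof.
move=> hE; have := hE; rewrite inE => /existsP[a /existsP[b /andP[_ /eqP E]]].
have ah : a \in h by rewrite E !inE eqxx.
have [y [E' n]] := edge_nbr hE ah.
by exists a, y.
Qed.

Lemma sg_lt h : h \in edges pa -> sg h < DD.
Proof. by case/edgeP => x [y [_ /nbr_lt]]. Qed.

Variables (E0 : {set {set vert}}) (p : {set vert} -> nat).
Hypothesis HE0 : E0 \subset edges pa.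
Hypothesis Hp : forall e, e \in E0 -> p e < DD.
Hypothesis Hdist : forall e f, e \in E0 -> f \in E0 -> e != f -> edge_dist_ge pa e f 3.

Lemma far e f (u v : vert) : e \in E0 -> f \in E0 -> e != f -> u \in e -> v \in f -> ~ near2 u v.
Proof.
move=> eE fE ef ue vf [s [ps ls ss]].
by have := Hdist eE fE ef ue vf ps ls; lia.
Qed.

Definition case1 e := fac (p e) == fac (sg e).
Definition hasc q (e : {set vert}) := [exists u in e, [exists w, nbr q u w]].
Definition AA e := (dcol (p e) != dcol (sg e)) && hasc (p e) e.
Definition BB e := (dcol (pr (p e)) != dcol (sg e)) && hasc (pr (p e)) e.
Definition fl e := if case1 e then p e != sg e
  else ~~ AA e && (BB e || (dcol (p e) == dcol (sg e))).
Definition flipped (h : {set vert}) := [exists e in E0, fl e && (fac (sg h) == fac (p e))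
   && [exists v in e, [exists z in h, reachb (fac (p e)) v z]]].
Definition col1 h := if flipped h then pr (sg h) else sg h.

Lemma col1_lt h : h \in edges pa -> col1 h < DD.
Proof. by move=> hE; rewrite /col1; case: ifP => _; rewrite ?pr_lt ?sg_lt. Qed.

Lemma fac_col1 h : h \in edges pa -> fac (col1 h) = fac (sg h).
Proof. by move=> hE; rewrite /col1; case: ifP => _; rewrite ?fac_pr ?sg_lt. Qed.

Lemma flipped_loc e x h : e \in E0 -> x \in e -> h \in edges pa -> x \in h ->
  flipped h = fl e && (fac (sg h) == fac (p e)).
Proof.
move=> eE xe hE xh; have [y [E n]] := edge_nbr hE xh.
apply/idP/idP.
  case/existsP => f /andP[fE /andP[/andP[flf /eqP fe] /existsP[v /andP[vf ez]]]].
  case: (eqVneq f e) => [<-|ne]; first by rewrite flf fe eqxx.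
  have st : step1 (fac (p f)) y x by apply/step1P; exists (sg h); rewrite -fe nbr_sym.
  rewrite E comp_vertex // in ez.
  by case: (far fE eE ne vf xe (reach_near ez)).
case/andP => fle fe; apply/existsP; exists e; rewrite eE fle fe /=.
apply/existsP; exists x; rewrite xe /=; apply/existsP; exists x; by rewrite xh reach_refl.
Qed.

Lemma col1_proper h h' w : h \in edges pa -> h' \in edges pa -> h != h' ->
  w \in h -> w \in h' -> col1 h != col1 h'.
Proof.
move=> hE hE' hh wh wh'.
have [y [E n]] := edge_nbr hE wh; have [y' [E' n']] := edge_nbr hE' wh'.
case: (eqVneq (sg h) (sg h')) => [eq|ne].
  by rewrite eq in n; have yy := nbr_uniq n n'; rewrite E E' yy eqxx in hh.
case: (eqVneq (fac (sg h)) (fac (sg h'))) => [F|F]; last first.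
  by apply/negP => /eqP C; move: F; rewrite -fac_col1 // C fac_col1 // eqxx.
have [E2 _] := two_colors (sg_lt hE) (sg_lt hE') F ne.
have fe : flipped h = flipped h'.
  rewrite /flipped; apply: eq_existsb_in => f _; rewrite -F.
  case: (eqVneq (fac (sg h)) (fac (p f))) => [G|]; rewrite ?andbF //= andbT.
  congr (_ && _); apply: eq_existsb => v; congr (_ && _).
  rewrite E E' !comp_vertex //; apply/step1P.
    by exists (sg h'); rewrite -G F nbr_sym.
  by exists (sg h); rewrite -G nbr_sym.
rewrite /col1 -fe E2 prK ?sg_lt //; case: ifP => _.
  exact: pr_neq (sg_lt hE).
by rewrite eq_sym; exact: pr_neq (sg_lt hE).
Qed.

Lemma same_col g h w : g \in edges pa -> h \in edges pa -> w \in g -> w \in h ->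
  col1 g = col1 h -> g = h.
Proof.
move=> gE hE wg wh c; apply/eqP/negPn/negP => ne.
by have := col1_proper gE hE ne wg wh; rewrite c eqxx.
Qed.

Lemma eE0 e : e \in E0 -> e \in edges pa.
Proof. by move/(subsetP HE0). Qed.

Lemma case1_val e : e \in E0 -> case1 e -> col1 e = p e.
Proof.
move=> eE c1; have [x [y [E n]]] := edgeP (eE0 eE).
have xe : x \in e by rewrite E !inE eqxx.
have c1' : fac (sg e) == fac (p e) by rewrite eq_sym.
rewrite /col1 (flipped_loc eE xe (eE0 eE) xe) /fl c1 c1' andbT.
have [pe|pe] := fac_same (sg_lt (eE0 eE)) (Hp eE) (esym (eqP c1)).
  by rewrite pe eqxx.
by rewrite pe (pr_neq (sg_lt (eE0 eE))).
Qed.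

Lemma case2_col1e e : e \in E0 -> ~~ case1 e -> col1 e = sg e.
Proof.
move=> eE c2; have [x [y [E n]]] := edgeP (eE0 eE).
have xe : x \in e by rewrite E !inE eqxx.
have c2' : (fac (sg e) == fac (p e)) = false by rewrite eq_sym; apply: negbTE.
by rewrite /col1 (flipped_loc eE xe (eE0 eE) xe) c2' andbF.
Qed.

Definition gam e := if AA e then p e else pr (p e).

Lemma reach_sq F s (x y x' y' v : vert) : fac s = F -> nbr s x' y' -> pa x x' -> pa y y' ->
  reachb F x' v -> near2 x v \/ near2 y v.
Proof.
move=> fs n px py; rewrite /reachb => /orP[/orP[/eqP->|s1]|/existsP[u /andP[s1 s2]]].
- by left; apply: near2_1.
- by left; apply: near2_2 px (step1_pa s1).
case/step1P: s1 => q1 [f1 n1]; case/step1P: s2 => q2 [f2 n2].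
case: (eqVneq s q1) => [E|ne1].
  by rewrite -E in n1; rewrite -(nbr_uniq n n1) in n2; right; apply: near2_2 py (nbr_pa n2).
have [E1 d1] := two_colors (nbr_lt n) (nbr_lt n1) (etrans fs (esym f1)) ne1.
case: (eqVneq q1 q2) => [E|ne2].
  by rewrite -E in n2; rewrite (nbr_back n1 n2); left; apply: near2_1.
have [E2 _] := two_colors (nbr_lt n1) (nbr_lt n2) (etrans f1 (esym f2)) ne2.
rewrite E2 E1 prK ?(nbr_lt n) // in n2.
have [z [nz1 nz2]] := nbr_sq n1 n d1.
rewrite (nbr_uniq nz1 n2) in nz2.
by right; apply: near2_2 py (nbr_pa nz2).
Qed.

Lemma gam_lt e : e \in E0 -> gam e < DD.
Proof. by move=> eE; rewrite /gam; case: ifP => _; rewrite ?pr_lt ?Hp. Qed.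

Lemma fac_gam e : e \in E0 -> fac (gam e) = fac (p e).
Proof. by move=> eE; rewrite /gam; case: ifP => _; rewrite ?fac_pr ?Hp. Qed.

Lemma gam_square e x y : e \in E0 -> ~~ case1 e -> AA e || BB e ->
  e = [set x; y] -> nbr (sg e) x y ->
  exists x' y', [/\ nbr (gam e) x x', nbr (gam e) y y' & nbr (sg e) x' y'] /\
    [/\ col1 [set x; x'] = p e, col1 [set y; y'] = p e & col1 [set x'; y'] = sg e].
Proof.
move=> eE c2 ab E n.
have [dg hg] : dcol (gam e) != dcol (sg e) /\ hasc (gam e) e.
  by rewrite /gam; move: ab; rewrite /AA /BB; case: ifP => [/andP[]|_ /andP[]].
case/existsP: hg => u /andP[ue /existsP[w nw]].
have [_ _ fxy _] := nbrP n.
have ue' : (u == x) || (u == y) by move: ue; rewrite E !inE.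
have xu : x (dcol (gam e)) = u (dcol (gam e)).
  by move: ue'; case/orP => /eqP->; last exact: (fxy _ dg).
have yu : y (dcol (gam e)) = u (dcol (gam e)).
  by move: ue'; case/orP => /eqP->; first exact: (esym (fxy _ dg)).
have nx := nbr_move nw xu; have ny := nbr_move nw yu.
set x' := upd x _ _ in nx; set y' := upd y _ _ in ny.
have dg' : dcol (sg e) != dcol (gam e) by rewrite eq_sym.
have [z [nz1 nz2]] := nbr_sq n nx dg'.
rewrite -(nbr_uniq ny nz1) in nz2.
have xe : x \in e by rewrite E !inE eqxx.
have ye : y \in e by rewrite E !inE eqxx orbT.
have [ex' _] := nbr_edge nx; have [ey' _] := nbr_edge ny; have [exy' sxy'] := nbr_edge nz2.
have xx'h : x \in [set x; x'] by rewrite !inE eqxx.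
have yy'h : y \in [set y; y'] by rewrite !inE eqxx.
have sx : sg [set x; x'] = gam e by case/nbr_edge: nx.
have sy : sg [set y; y'] = gam e by case/nbr_edge: ny.
have flv : (if fl e then pr (gam e) else gam e) = p e.
  rewrite /fl (negbTE c2) /gam; move: ab; case: (AA e) => //= ->.
  by rewrite prK ?Hp.
exists x', y'; split; first by split.
split.
- by rewrite /col1 (flipped_loc eE xe ex' xx'h) sx fac_gam // eqxx andbT.
- by rewrite /col1 (flipped_loc eE ye ey' yy'h) sy fac_gam // eqxx andbT.
rewrite /col1; case: ifP => // /existsP[f /andP[fE /andP[/andP[_ /eqP F] /existsP[v /andP[vf ez]]]]].
have st : step1 (fac (p f)) y' x'.
  by apply/step1P; exists (sg e); split; [rewrite -sxy' | rewrite nbr_sym].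
rewrite comp_vertex // in ez.
case: (eqVneq f e) => [fe|ne].
  by rewrite fe sxy' in F; rewrite /case1 F eqxx in c2.
have ne' : e != f by rewrite eq_sym.
case: (reach_sq (etrans (esym (congr1 fac sxy')) F) nz2 (nbr_pa nx) (nbr_pa ny) (reach_sym ez)) => nr.
  by case: (far eE fE ne' xe vf nr).
by case: (far eE fE ne' ye vf nr).
Qed.

Lemma nogam e x h : e \in E0 -> ~~ case1 e -> ~~ (AA e || BB e) -> x \in e ->
  h \in edges pa -> x \in h -> col1 h != p e.
Proof.
move=> eE c2 nab xe hE xh; apply/eqP => C.
have [z [Eh nh]] := edge_nbr hE xh.
have fh : fac (sg h) = fac (p e) by rewrite -fac_col1 // C.
have FL := flipped_loc eE xe hE xh; rewrite fh eqxx andbT in FL.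
have hc : hasc (sg h) e by apply/existsP; exists x; rewrite xe; apply/existsP; exists z.
move: nab; rewrite negb_or => /andP[nA nB].
have fle : fl e = (dcol (p e) == dcol (sg e)) by rewrite /fl (negbTE c2) nA (negbTE nB).
move: C; rewrite /col1 FL fle.
case: (fac_same (Hp eE) (sg_lt hE) (esym fh)) => S; rewrite S; case: eqP => d.
- by move=> C; move: (pr_neq (Hp eE)); rewrite C eqxx.
- move=> _; have hc' : hasc (p e) e by rewrite -S.
  by move: nA; rewrite /AA hc' andbT negbK => /eqP.
- move=> _; have hc' : hasc (pr (p e)) e by rewrite -S.
  by move: nB; rewrite /BB hc' andbT -d dcol_pr ?Hp.
- by move=> C; move: (pr_neq (Hp eE)); rewrite C eqxx.
Qed.

Definition VS e : {set vert} :=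
  e :|: (if AA e || BB e then [set w | [exists u in e, nbr (gam e) u w]] else set0).

Lemma VS_near e w : w \in VS e -> exists u, u \in e /\ (w = u \/ pa u w).
Proof.
rewrite /VS inE => /orP[we|]; first by exists w; split => //; left.
case: ifP => _; last by rewrite inE.
by rewrite inE => /existsP[u /andP[ue nu]]; exists u; split => //; right; apply: nbr_pa nu.
Qed.

Lemma VS_disj e f w : e \in E0 -> f \in E0 -> e != f -> w \in VS e -> w \in VS f -> False.
Proof.
move=> eE fE ef /VS_near[u [ue hu]] /VS_near[u' [uf hu']]; apply: (far eE fE ef ue uf).
case: hu => [<-|pu]; case: hu' => [<-|pu'].
- exact: near2_0.
- by apply: near2_1; rewrite pa_sym.
- exact: near2_1.
- by apply: near2_2 pu _; rewrite pa_sym.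
Qed.

Definition S e := [set h in edges pa | (col1 h \in [:: sg e; p e]) && (h \subset VS e)].

Lemma sub_pair (a b : vert) (A : {set vert}) : a \in A -> b \in A -> [set a; b] \subset A.
Proof. by move=> aA bA; apply/subsetP => z; rewrite !inE => /orP[/eqP->|/eqP->]. Qed.

Lemma S_closed e h h' w : e \in E0 -> ~~ case1 e -> h \in S e -> h' \in edges pa ->
  w \in h -> w \in h' -> col1 h' \in [:: sg e; p e] -> h' \in S e.
Proof.
move=> eE c2; rewrite inE => /andP[hE /andP[_ hsub]] h'E wh wh' ch'.
have wV : w \in VS e by apply: (subsetP hsub).
rewrite inE h'E ch' /=.
have key : forall g, g \in edges pa -> w \in g -> col1 g = col1 h' -> g \subset VS e ->
    h' \subset VS e.
  by move=> g gE wg cg gs; rewrite -(same_col gE h'E wg wh' cg).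
have eV : e \subset VS e by apply: subsetUl.
have c1e := case2_col1e eE c2.
have [x [y [E n]]] := edgeP (eE0 eE).
have xe : x \in e by rewrite E !inE eqxx.
have ye : y \in e by rewrite E !inE eqxx orbT.
move: ch'; rewrite !inE => /orP[/eqP c|/eqP c]; last first.
  case: (boolP (AA e || BB e)) => ab; last first.
    have we := wV; rewrite /VS (negbTE ab) inE inE orbF in we.
    by move: (nogam eE c2 ab we h'E wh'); rewrite c eqxx.
  have [x' [y' [[nx ny nxy] [cx cy cxy]]]] := gam_square eE c2 ab E n.
  have x'V : x' \in VS e.
    by rewrite /VS ab !inE; apply/orP; right; apply/existsP; exists x; rewrite xe nx.
  have y'V : y' \in VS e.
    by rewrite /VS ab !inE; apply/orP; right; apply/existsP; exists y; rewrite ye ny.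
  have wV' := wV; rewrite /VS ab !inE in wV'.
  case/orP: wV' => [we|/existsP[u /andP[ue nu]]].
    have : w \in [set x; y] by rewrite -E.
    rewrite !inE => /orP[/eqP wx|/eqP wy].
      apply: (key [set x; x']); rewrite ?wx ?cx ?c //.
        by case/nbr_edge: nx.
        by rewrite !inE eqxx.
      by apply: sub_pair => //; apply: (subsetP eV).
    apply: (key [set y; y']); rewrite ?wy ?cy ?c //.
      by case/nbr_edge: ny.
      by rewrite !inE eqxx.
    by apply: sub_pair => //; apply: (subsetP eV).
  have : u \in [set x; y] by rewrite -E.
  rewrite !inE => /orP[/eqP ux|/eqP uy].
    rewrite ux in nu; have wx' : w = x' by rewrite (nbr_uniq nx nu).
    apply: (key [set x; x']); rewrite ?cx ?c //.
      by case/nbr_edge: nx.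
      by rewrite wx' !inE eqxx orbT.
    by apply: sub_pair => //; apply: (subsetP eV).
  rewrite uy in nu; have wy' : w = y' by rewrite (nbr_uniq ny nu).
  apply: (key [set y; y']); rewrite ?cy ?c //.
    by case/nbr_edge: ny.
    by rewrite wy' !inE eqxx orbT.
  by apply: sub_pair => //; apply: (subsetP eV).
case: (boolP (AA e || BB e)) => ab; last first.
  have we := wV; rewrite /VS (negbTE ab) inE inE orbF in we.
  by apply: (key e) => //; [exact: eE0 | rewrite c1e c].
have [x' [y' [[nx ny nxy] [cx cy cxy]]]] := gam_square eE c2 ab E n.
have x'V : x' \in VS e.
  by rewrite /VS ab !inE; apply/orP; right; apply/existsP; exists x; rewrite xe nx.
have y'V : y' \in VS e.
  by rewrite /VS ab !inE; apply/orP; right; apply/existsP; exists y; rewrite ye ny.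
have wV' := wV; rewrite /VS ab !inE in wV'.
case/orP: wV' => [we|/existsP[u /andP[ue nu]]].
  by apply: (key e) => //; [exact: eE0 | rewrite c1e c].
have [exy' _] := nbr_edge nxy.
have : u \in [set x; y] by rewrite -E.
rewrite !inE => /orP[/eqP ux|/eqP uy].
  rewrite ux in nu; have wx' : w = x' by rewrite (nbr_uniq nx nu).
  have wg : w \in [set x'; y'] by rewrite wx' !inE eqxx.
  have cg : col1 [set x'; y'] = col1 h' by rewrite cxy c.
  exact: (key _ exy' wg cg (sub_pair x'V y'V)).
rewrite uy in nu; have wy' : w = y' by rewrite (nbr_uniq ny nu).
have wg : w \in [set x'; y'] by rewrite wy' !inE eqxx orbT.
have cg : col1 [set x'; y'] = col1 h' by rewrite cxy c.
exact: (key _ exy' wg cg (sub_pair x'V y'V)).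
Qed.

Definition sw (a b c : nat) := if c == a then b else if c == b then a else c.

Lemma swK a b : involutive (sw a b).
Proof.
move=> c; rewrite /sw; case: (eqVneq c a) => [->|ca].
  by rewrite eqxx; case: eqVneq.
case: (eqVneq c b) => [->|cb]; first by rewrite eqxx.
by rewrite (negbTE ca) (negbTE cb).
Qed.

Lemma sw_mem a b c : c \in [:: a; b] -> sw a b c \in [:: a; b].
Proof.
move=> cm; rewrite /sw; case: ifP => _; first by rewrite !inE eqxx orbT.
by case: ifP => _ //; rewrite !inE eqxx.
Qed.

Lemma sw_lt a b c n : a < n -> b < n -> c < n -> sw a b c < n.
Proof. by rewrite /sw => ? ? ?; case: ifP => _ //; case: ifP. Qed.

Definition pk h := [pick e in E0 | ~~ case1 e && (h \in S e)].
Definition col h := if pk h is Some e then sw (sg e) (p e) (col1 h) else col1 h.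

Lemma S_sub e h : h \in S e -> h \subset VS e.
Proof. by rewrite inE => /andP[_ /andP[_]]. Qed.

Lemma S_col e h : h \in S e -> col1 h \in [:: sg e; p e].
Proof. by rewrite inE => /andP[_ /andP[]]. Qed.

Lemma S_uniq e f h w : e \in E0 -> f \in E0 -> h \in S e -> h \in S f -> w \in h -> e = f.
Proof.
move=> eE fE he hf wh; apply/eqP/negPn/negP => ne.
by apply: (VS_disj eE fE ne (subsetP (S_sub he) w wh) (subsetP (S_sub hf) w wh)).
Qed.

Lemma col_proper h h' w : h \in edges pa -> h' \in edges pa -> h != h' ->
  w \in h -> w \in h' -> col h != col h'.
Proof.
move=> hE hE' ne wh wh'; rewrite /col /pk.
case: pickP => [e /andP[eE /andP[c2 hS]]|nh]; case: pickP => [f /andP[fE /andP[c2' hS']]|nh'].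
- case: (eqVneq e f) => [ef|ef].
    rewrite -ef; apply/negP => /eqP C; have C' := congr1 (sw (sg e) (p e)) C.
    by rewrite !swK in C'; move: (col1_proper hE hE' ne wh wh'); rewrite C' eqxx.
  by case: (VS_disj eE fE ef (subsetP (S_sub hS) w wh) (subsetP (S_sub hS') w wh')).
- apply/negP => /eqP C.
  have hS' : h' \in S e.
    by apply: (S_closed eE c2 hS hE' wh wh'); rewrite -C sw_mem // S_col.
  by move: (nh' e); rewrite eE c2 hS'.
- apply/negP => /eqP C.
  have hS : h \in S f.
    by apply: (S_closed fE c2' hS' hE wh' wh); rewrite C sw_mem // S_col.
  by move: (nh f); rewrite fE c2' hS.
- exact: (col1_proper hE hE' ne wh wh').
Qed.

Lemma col_lt h : h \in edges pa -> col h < DD.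
Proof.
move=> hE; rewrite /col /pk; case: pickP => [e /andP[eE _]|_]; last exact: col1_lt.
by apply: sw_lt; [exact: sg_lt (eE0 eE) | exact: Hp | exact: col1_lt].
Qed.

Lemma col_E0 e : e \in E0 -> col e = p e.
Proof.
move=> eE; have [x [y [E n]]] := edgeP (eE0 eE).
have xe : x \in e by rewrite E !inE eqxx.
have eVe : e \subset VS e by apply: subsetUl.
rewrite /col /pk; case: pickP => [f /andP[fE /andP[c2 eS]]|ne].
  have fe : f = e.
    apply/eqP/negPn/negP => ne.
    by apply: (VS_disj fE eE ne (subsetP (S_sub eS) x xe) (subsetP eVe x xe)).
  rewrite fe in c2 *; rewrite case2_col1e // /sw eqxx //.
case: (boolP (case1 e)) => c1; first exact: case1_val.
have eS : e \in S e by rewrite inE eE0 //= case2_col1e // !inE eqxx eVe.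
by move: (ne e); rewrite eE c1 eS.
Qed.

Lemma all_colors i (v : V i) c : #|[set u | adj i v u]| = Dl i -> c < Dl i ->
  exists u, adj i v u /\ cc i [set v; u] = c.
Proof.
move=> dv cl.
case: (boolP [exists u, adj i v u && (cc i [set v; u] == c)]) => [/existsP[u /andP[a /eqP e]]|no].
  by exists u.
exfalso.
pose g (u : V i) : 'I_(Dl i).+1 := inord (cc i [set v; u]).
have ltS u : adj i v u -> cc i [set v; u] < (Dl i).+1 by move/cc_lt => h; apply: ltnW.
have inj : {in [set u | adj i v u] &, injective g}.
  move=> u u'; rewrite !inE => a a' /(congr1 (@nat_of_ord _)); rewrite /g !inordK ?ltS //.
  exact: cc_inj.
have sub : [set g u | u in [set u | adj i v u]] \subset [set~ ord_max] :\ inord c.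
  apply/subsetP => j /imsetP[u]; rewrite inE => a ->; rewrite !inE.
  apply/andP; split.
    apply/negP => /eqP /(congr1 (@nat_of_ord _)); rewrite /= !inordK ?ltS //; last by apply: ltnW.
    by move=> E; move: no; rewrite negb_exists => /forallP /(_ u); rewrite a E eqxx.
  apply/negP => /eqP /(congr1 (@nat_of_ord _)); rewrite /= inordK ?ltS // => E.
  by move: (cc_lt a); rewrite E ltnn.
have := subset_leq_card sub; rewrite card_in_imset // dv.
have cin : inord c \in [set~ (ord_max : 'I_(Dl i).+1)].
  rewrite !inE; apply/negP => /eqP /(congr1 (@nat_of_ord _)); rewrite /= inordK; last by apply: ltnW.
  by move=> E; rewrite E ltnn in cl.
move: (cardsD1 (inord c) [set~ (ord_max : 'I_(Dl i).+1)]); rewrite cin cardsC1 card_ord /=.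
lia.
Qed.

Lemma chi_lb (z : vert) : DD <= chromatic_index pa.
Proof.
pose vm i : V i := [arg max_(v > z i) #|[set u | adj i v u]|].
have dvm i : #|[set u | adj i (vm i) u]| = Dl i.
  by rewrite /Delta (bigmax_eq_arg (z i)).
pose X : vert := [ffun i => vm i].
have hasY q : q < DD -> exists Y, nbr q X Y.
  move=> qD; have := dcol_spec qD; set i := dcol q => /andP[q1 q2].
  have cl : q - offs i < Dl i by lia.
  have [u [a cu]] := all_colors (dvm i) cl.
  have a' : adj i (X i) u by rewrite ffunE.
  exists (upd X i u); apply/andP; split; first exact: upd_pa.
  rewrite (@sg_pair X (upd X i u) i) ?upd_same //; last by move=> j ji; rewrite upd_other // eq_sym.
  by rewrite ffunE cu; apply/eqP; lia.
pose Yf q := odflt X [pick Y | nbr q X Y].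
have nY q : q < DD -> nbr q X (Yf q).
  move=> qD; rewrite /Yf; case: pickP => [Y //|no].
  by have [Y nY] := hasY q qD; rewrite no in nY.
rewrite /chromatic_index; case: ex_minnP => m /existsP[cf /andP[/forallP lt /forallP pc]] _.
pose f (q : 'I_DD) := cf [set X; Yf q].
have inj : injective f.
  move=> q q' E; apply/eqP/negPn/negP => ne.
  have [e1 s1] := nbr_edge (nY q (ltn_ord q)); have [e2 s2] := nbr_edge (nY q' (ltn_ord q')).
  move: (pc [set X; Yf q]) => /implyP /(_ e1) /forallP /(_ [set X; Yf q']) /implyP /(_ e2).
  move=> /implyP H.
  have : cf [set X; Yf q] != cf [set X; Yf q'].
    apply: H; apply/andP; split.
      apply/negP => /eqP E'; move: s1; rewrite E' s2 => h.
      by move/negP: ne; apply; apply/eqP/val_inj => /=; rewrite h.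
    by apply/set0Pn; exists X; rewrite !inE eqxx.
  by rewrite /f in E; rewrite E eqxx.
have sub : [set f q | q in 'I_DD] \subset [set~ (ord_max : 'I_m.+1)].
  apply/subsetP => j /imsetP[q _ ->]; rewrite !inE.
  have [e1 _] := nbr_edge (nY q (ltn_ord q)).
  move: (lt [set X; Yf q]); rewrite e1 /= => h.
  by apply/negP => /eqP /(congr1 (@nat_of_ord _)) /= E; rewrite /f E ltnn in h.
by move: (subset_leq_card sub); rewrite card_imset // cardsC1 !card_ord.
Qed.

Lemma main_sec : exists c : {set vert} -> nat,
    proper_coloring pa (chromatic_index pa) c /\ forall e, e \in E0 -> c e = p e.
Proof.
exists col; split; last exact: col_E0.
apply/andP; split.
  apply/forallP => h; apply/implyP => hE.
  have [x [y [_ _]]] := edgeP hE.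
  exact: leq_trans (col_lt hE) (chi_lb x).
apply/forallP => h; apply/implyP => hE; apply/forallP => h'; apply/implyP => hE'.
apply/implyP => /andP[ne /set0Pn[w]]; rewrite inE => /andP[wh wh'].
exact: col_proper hE hE' ne wh wh'.
Qed.

End Prod.

Theorem theorem2 (k : nat) (V : 'I_k -> finType) (adj : forall i, rel (V i))
  (Hsym : forall i, symmetric (adj i)) (Hirr : forall i, irreflexive (adj i))
  (Hk : 2 <= k)
  (Hclass1 : forall i, class1 (adj i))
  (Heven : ~~ odd (\sum_(i < k) Delta (adj i)))
  (Hlt : forall i, 2 * Delta (adj i) < \sum_(j < k) Delta (adj j))
  (E0 : {set {set prod_vertex V}}) (p : {set prod_vertex V} -> nat)
  (HE0 : E0 \subset edges (prod_adj adj))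
  (Hp : forall e, e \in E0 -> p e < \sum_(i < k) Delta (adj i))
  (Hdist : forall e f, e \in E0 -> f \in E0 -> e != f ->
             edge_dist_ge (prod_adj adj) e f 3) :
  exists c : {set prod_vertex V} -> nat,
    proper_coloring (prod_adj adj) (chromatic_index (prod_adj adj)) c
    /\ forall e, e \in E0 -> c e = p e.
Proof.
have i0 : 'I_k := Ordinal (leq_trans (isT : 0 < 2) Hk).
pose cf (i : 'I_k) := [pick c : {ffun {set V i} -> 'I_(Delta (adj i)).+1} |
   proper_coloring (adj i) (Delta (adj i)) (fun e => c e)].
pose cc (i : 'I_k) (e : {set V i}) : nat := if cf i is Some c then c e else 0.
have Hcc : forall i, proper_coloring (adj i) (Delta (adj i)) (cc i).
  move=> i; rewrite /cc /cf; case: pickP => [c //|no].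
  have := Hclass1 i; rewrite /class1 /chromatic_index; case: ex_minnP => m hm _ E.
  by move: hm; rewrite E => /existsP[c hc]; rewrite no in hc.
have E := DDE adj.
apply: (main_sec Hsym Hirr i0 Hcc) => //; by rewrite E.
Qed.
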